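(* Let $\mathcal{M}=(E,\rho)$ be a $q$-matroid, $l=\dim\mathrm{cl}(0)$ and $f=\dim E-l$. Then $\mathcal{Z}(\mathcal{M})=\{\mathrm{cl}(0)\}$ if and only if $\mathcal{M}\approx\mathcal{U}_{0,l}\oplus\mathcal{U}_{f,f}$. In particular, $\mathcal{M}$ has exactly one cyclic flat if and only if it is (equivalent to) the direct sum of a trivial and a free $q$-matroid.
   Context: Let $\mathbb{F}=\mathbb{F}_q$. A $q$-matroid is $\mathcal{M}=(E,\rho)$, $E$ a finite-dimensional $\mathbb{F}$-vector space, $\rho$ from subspaces to $\mathbb{Z}_{\ge0}$ with $0\le\rho(V)\le\dim V$, monotone and submodular. Flat: $\rho(F+\langle x\rangle)>\rho(F)$ for all $x\notin F$. Closure: $\mathrm{cl}(V)=\sum\{\langle x\rangle:\rho(V+\langle x\rangle)=\rho(V)\}$. Cyclic core: $\mathrm{cyc}(V)=\{x\in V\mid\rho(W)=\rho(V)\text{ for all }W\le V\text{ with }W+\langle x\rangle=V\}$; cyclic: $\mathrm{cyc}(V)=V$; $\mathcal{Z}(\mathcal{M})$: the set of cyclic flats. $\mathcal{U}_{0,n}$ (trivial) and $\mathcal{U}_{n,n}$ (free) are the $q$-matroids on an $n$-dimensional space with $\rho\equiv0$, resp. $\rho(V)=\dim V$. Equivalence $\approx$: an $\mathbb{F}$-isomorphism of ground spaces preserving rank. Direct sum: for $E=E_1\oplus E_2$ with projections $\pi_i$, $\mathcal{M}_1\oplus\mathcal{M}_2=(E,\rho)$ where $\rho(V)=\dim V+\min_{X\le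 V}(\rho_1(\pi_1(X))+\rho_2(\pi_2(X))-\dim X)$. *)

(* Defs.v *)
From HB Require Import structures.
From mathcomp Require Import all_boot all_order all_algebra all_field.
Set Implicit Arguments. Unset Strict Implicit. Unset Printing Implicit Defensive.
Import GRing.Theory.
Local Open Scope ring_scope.

Section QMatroid.
Variables (F : finFieldType) (E : vectType F).
Implicit Types (V W : {vspace E}) (r : {vspace E} -> nat).

Definition qmatroid r : Prop :=
  [/\ forall V, (r V <= \dim V)%N,
      forall V W, (V <= W)%VS -> (r V <= r W)%N
    & forall V W, (r (V + W)%VS + r (V :&: W)%VS <= r V + r W)%N].

Definition qflat r V : Prop :=
  forall x : E, x \notin V -> (r V < r (V + <[x]>)%VS)%N.

Definition qcl r V : {vspace E} :=
  (\sum_(x : finvect_type E | r (V + <[x : E]>)%VS == r V) <[x : E]>)%VS.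

(* x lies in the cyclic core of V *)
Definition in_qcyc r V (x : E) : Prop :=
  x \in V /\ (forall W, (W <= V)%VS -> (W + <[x]>)%VS = V -> r W = r V).

Definition qcyclic r V : Prop := forall x : E, x \in V -> in_qcyc r V x.

Definition qcyclic_flat r V : Prop := qflat r V /\ qcyclic r V.
End QMatroid.

Definition qequiv (F : finFieldType) (E1 E2 : vectType F)
  (r1 : {vspace E1} -> nat) (r2 : {vspace E2} -> nat) : Prop :=
  exists phi : 'Hom(E1, E2),
    [/\ lker phi = 0%VS, limg phi = fullv
      & forall V : {vspace E1}, r2 (phi @: V)%VS = r1 V].

Definition qU0 (F : finFieldType) (n : nat) : {vspace 'rV[F]_n} -> nat :=
  fun _ => 0%N.
Definition qUfree (F : finFieldType) (n : nat) : {vspace 'rV[F]_n} -> nat :=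
  fun V => \dim V.

(* direct sum on E1 x E2: rho(V) = dim V + min_{X <= V} (r1(pi1 X) + r2(pi2 X) - dim X),
   written equivalently in nat as min_{X <= V} (r1(pi1 X) + r2(pi2 X) + (dim V - dim X)).
   Every subspace X of E1 x E2 is the span of some (dim (E1 x E2))-tuple, so the
   minimum over subspaces is taken over such tuples; the initial value is the
   value at X = 0. *)
Section DirectSum.
Variables (F : finFieldType) (E1 E2 : vectType F).
Variables (r1 : {vspace E1} -> nat) (r2 : {vspace E2} -> nat).

Definition qpi1 : 'Hom((E1 * E2)%type, E1) := linfun (fun x : E1 * E2 => x.1).
Definition qpi2 : 'Hom((E1 * E2)%type, E2) := linfun (fun x : E1 * E2 => x.2).

Definition qdsum_term (V X : {vspace (E1 * E2)%type}) : nat :=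
  (r1 (qpi1 @: X)%VS + r2 (qpi2 @: X)%VS + (\dim V - \dim X))%N.

Definition qdsum (V : {vspace (E1 * E2)%type}) : nat :=
  \big[minn/qdsum_term V 0%VS]_(s : (\dim {:(E1 * E2)%type}).-tuple
                                   (finvect_type (E1 * E2)%type)
                              | (<<s>> <= V)%VS) qdsum_term V <<s>>%VS.
End DirectSum.

(* Main.v *)
Require Import Defs.
From HB Require Import structures.
From mathcomp Require Import all_boot all_order all_algebra all_field.
From mathcomp Require Import zify.
From Stdlib Require Import Classical.
Set Implicit Arguments. Unset Strict Implicit. Unset Printing Implicit Defensive.
Import GRing.Theory.
Local Open Scope ring_scope.

Definition rk (F : finFieldType) (E : vectType F) (K V : {vspace E}) : nat :=
  (\dim V - \dim (V :&: K))%N.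

Lemma dim_rV (F : finFieldType) n : \dim {:'rV[F]_n} = n.
Proof. by rewrite dimvf /dim /= mul1n. Qed.

Lemma construct (F : finFieldType) (E : vectType F) (C : {vspace E}) (f : nat)
  (hf : f = \dim C^C) :
  exists phi : 'Hom(E, ('rV[F]_(\dim C) * 'rV[F]_f)%type),
    [/\ lker phi == 0%VS, limg phi = fullv & (phi @: C)%VS = lker (qpi2 _ _)].
Proof.
pose g (v : E) : ('rV[F]_(\dim C) * 'rV[F]_f)%type :=
  (\row_i coord (vbasis C) i (projv C v),
   \row_j coord (vbasis C^C) (cast_ord hf j) (v - projv C v)).
have lin_g : linear g.
  move=> k u v; rewrite /g; apply: injective_projections => /=; apply/rowP => i; rewrite !mxE.
    by rewrite !linearP.
  rewrite [projv C (_ + _)]linearP /= opprD addrACA -scalerBr.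
  by rewrite linearP.
pose fL : {linear E -> _} := HB.pack g (GRing.isLinear.Build _ _ _ _ g lin_g).
have phiE : forall v, linfun fL v = g v by move=> v; rewrite lfunE.
exists (linfun fL).
have ker0 : lker (linfun fL) == 0%VS.
  rewrite -subv0; apply/subvP => x; rewrite memv_ker phiE memv0 /g => /eqP [h1 h2].
  have p0 : projv C x = 0.
    rewrite (coord_vbasis (memv_proj C x)); apply: big1 => i _.
    by move/rowP/(_ i): h1; rewrite !mxE => ->; rewrite scale0r.
  have p1 : x - projv C x = 0.
    rewrite (coord_vbasis (memv_projC C x)); apply: big1 => i _.
    move/rowP/(_ (cast_ord (esym hf) i)): h2; rewrite !mxE cast_ordKV => ->.
    by rewrite scale0r.
  by move: p1; rewrite p0 subr0 => ->.
have dimE : \dim {:E} = (\dim C + f)%N.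
  by rewrite hf dimv_compl; have := dimvS (subvf C); lia.
have dimT : \dim {:('rV[F]_(\dim C) * 'rV[F]_f)%type} = (\dim C + f)%N.
  by rewrite dimvf /dim /= !dim_matrix !mul1r.
split=> //.
  apply/eqP; rewrite eqEdim subvf /= dimT -dimE limg_dim_eq //.
  by rewrite (eqP ker0) capv0.
have CK : (linfun fL @: C <= lker (qpi2 _ _))%VS.
  apply/subvP => y /memv_imgP [v vC ->]; rewrite memv_ker /qpi2 lfunE /= phiE /g /=.
  apply/eqP/rowP => j; rewrite !mxE projv_id // subrr linear0.
  by [].
apply/eqP; rewrite eqEdim CK /= limg_dim_eq ?(eqP ker0) ?capv0 //.
have := limg_ker_dim (qpi2 ('rV[F]_(\dim C)) ('rV[F]_f)) fullv.
have -> : limg (qpi2 ('rV[F]_(\dim C)) ('rV[F]_f)) = fullv.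
  apply/eqP; rewrite eqEsubv subvf /=; apply/subvP => y _.
  have -> : y = qpi2 ('rV[F]_(\dim C)) ('rV[F]_f) (0, y) by rewrite /qpi2 lfunE.
  by apply: memv_img; rewrite memvf.
rewrite capfv dimT dim_rV => /eqP; rewrite eqn_add2r => /eqP h. exact: (eq_leq h).
Qed.

Lemma rk_img (F : finFieldType) (E1 E2 : vectType F) (phi : 'Hom(E1, E2))
  (K V : {vspace E1}) : lker phi == 0%VS -> rk (phi @: K) (phi @: V) = rk K V.
Proof.
move=> h; rewrite /rk -lker0_img_cap // !limg_dim_eq // (eqP h) capv0 //.
Qed.

Lemma bigmin_le_seq (I : eqType) (s : seq I) (P : pred I) (Fn : I -> nat) x i0 :
  i0 \in s -> P i0 -> (\big[minn/x]_(i <- s | P i) Fn i <= Fn i0)%N.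
Proof.
elim: s => //= a s IH; rewrite inE big_cons => /orP [/eqP <- -> | ins Pi].
  exact: geq_minl.
case: (P a); last exact: IH.
exact: leq_trans (geq_minr _ _) (IH ins Pi).
Qed.

Lemma qdsum_rk (F : finFieldType) (E1 E2 : vectType F)
  (r1 : {vspace E1} -> nat) (r2 : {vspace E2} -> nat)
  (h1 : forall V, r1 V = 0%N) (h2 : forall V, r2 V = \dim V)
  (W : {vspace (E1 * E2)%type}) :
  qdsum r1 r2 W = rk (lker (qpi2 E1 E2)) W.
Proof.
have tb : forall X : {vspace (E1 * E2)%type}, (X <= W)%VS ->
    (rk (lker (qpi2 E1 E2)) W <= qdsum_term r1 r2 W X)%N.
  move=> X XW; rewrite /qdsum_term h1 h2 /rk.
  have := limg_ker_dim (qpi2 E1 E2) X.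
  have := dimvS (capvS XW (subvv (lker (qpi2 E1 E2)))).
  have := dimvS XW. have := dimvS (capvSl W (lker (qpi2 E1 E2))).
  set a := \dim (W :&: _). set b := \dim (X :&: _). set c := \dim (_ @: X).
  set d := \dim X. set e := \dim W.
  lia.
rewrite /qdsum; apply/eqP; rewrite eqn_leq; apply/andP; split; last first.
  apply: (big_ind (fun m => rk (lker (qpi2 E1 E2)) W <= m)%N).
  - by apply: tb; apply: sub0v.
  - by move=> a b ha hb; rewrite leq_min ha hb.
  - by move=> s hs; apply: tb.
set n := \dim {:(E1 * E2)%type}.
pose s0 := [tuple (nth 0 (vbasis W) i : finvect_type (E1 * E2)%type) | i < n].
have hs0 : (<<s0>> = W)%VS.
  apply/eqP; rewrite eqEsubv; apply/andP; split.
    apply/span_subvP => y /tnthP [i ->]; rewrite tnth_mktuple.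
    case: (ltnP i (\dim W)) => hi.
      by apply: vbasis_mem; apply: mem_nth; rewrite size_tuple.
    by rewrite nth_default ?size_tuple // mem0v.
  rewrite -{1}(span_basis (vbasisP W)).
  apply: sub_span => y /(nthP 0) [i hi <-].
  apply/tnthP.
  have hin : (i < n)%N.
    by apply: leq_trans (dimvS (subvf W)); rewrite size_tuple in hi.
  by exists (Ordinal hin); rewrite tnth_mktuple.
eapply leq_trans.
  apply: (@bigmin_le_seq _ _ _ _ _ s0); first exact: mem_index_enum.
  by rewrite /= hs0 subvv.
rewrite /= hs0.
rewrite /qdsum_term h1 h2 /rk.
have := limg_ker_dim (qpi2 E1 E2) W. lia.
Qed.

Section Gen.
Variables (F : finFieldType) (E : vectType F).
Implicit Types (U V W K : {vspace E}).


Lemma dim_add_line U (x : E) : x \notin U -> \dim (U + <[x]>)%VS = (\dim U).+1.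
Proof.
move=> xU.
have h1 := dimv_sum_cap U <[x]>.
have h0 : (U :&: <[x]> = 0)%VS.
  apply/eqP; rewrite -subv0; apply/subvP => y /[!memv_cap] /andP[yU /vlineP[k ykx]]; subst y.
  rewrite memv0; case: (eqVneq k 0) => [->|kn0]; first by rewrite scale0r.
  by have := memvZ k^-1 yU; rewrite scalerA mulVf // scale1r (negbTE xU).
have x0 : x != 0 by apply: contraNneq xU => ->; rewrite mem0v.
by move: h1; rewrite h0 dimv0 dim_vline x0 addn0 addn1.
Qed.

Lemma dim_add_le U x : (\dim (U + <[x]>)%VS <= (\dim U).+1)%N.
Proof.
have h1 := dimv_sum_cap U <[x]>. have := dim_vline x. case: (x != 0) => /= h; lia.
Qed.

Variable r : {vspace E} -> nat.
Hypothesis Hr : qmatroid r.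

Lemma r_dim V : (r V <= \dim V)%N. Proof. by case: Hr. Qed.
Lemma r_mono V W : (V <= W)%VS -> (r V <= r W)%N. Proof. by case: Hr => _ h _; apply: h. Qed.
Lemma r_sub V W : (r (V + W)%VS + r (V :&: W)%VS <= r V + r W)%N. Proof. by case: Hr. Qed.
Lemma r0 : r 0%VS = 0%N.
Proof. by have := r_dim 0%VS; rewrite dimv0; lia. Qed.
Lemma r_add V W : (r (V + W)%VS <= r V + \dim W)%N.
Proof. have := r_sub V W; have := r_dim W; lia. Qed.
Lemma r_le_sup V W : (V <= W)%VS -> (r W <= r V + (\dim W - \dim V))%N.
Proof.
move=> VW. have := r_add V (W :\: V). rewrite addvC addv_diff (addv_idPl VW).
have := dimv_cap_compl W V. rewrite (capv_idPr VW). lia.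
Qed.

Lemma r_cl0 : r (qcl r 0%VS) = 0%N.
Proof.
rewrite /qcl; apply: (big_ind (fun U => r U = 0%N)); first exact: r0.
  by move=> A B hA hB; have := r_sub A B; lia.
by move=> x /eqP; rewrite add0v r0.
Qed.

Lemma rk_ge V K : (r K = 0)%N -> (r V <= rk K V)%N.
Proof.
move=> rK. rewrite /rk. have := r_add (V :&: K) (V :\: K).
rewrite addvC addv_diff_cap. have := r_mono (capvSr V K).
have := dimv_cap_compl V K. lia.
Qed.

Lemma rk0P K U : (rk K U = 0)%N <-> (U <= K)%VS.
Proof.
rewrite /rk; split=> [h|h]; last by rewrite (capv_idPl h) subnn.
have h2 : (\dim U <= \dim (U :&: K))%N by lia.
have := dimv_leqif_eq (capvSl U K) => /leqifP.
case: eqP => [e _|_ hl]; first by apply/capv_idPl.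
lia.
Qed.

Section Step1b.
Variable K : {vspace E}.
Hypothesis hK : forall V, r V = rk K V.

Lemma step1b V : qcyclic_flat r V <-> V = K.
Proof.
split.
  case=> fl cy.
  have KV : (K <= V)%VS.
    apply/subvP => x xK; apply/negPn/negP => xV.
    have := fl x xV; rewrite !hK /rk dim_add_line //.
    have xVK : x \notin (V :&: K)%VS by rewrite memv_cap (negbTE xV).
    have := dim_add_line xVK.
    have : ((V :&: K) + <[x]> <= (V + <[x]>) :&: K)%VS.
      rewrite subv_add; apply/andP; split.
        by apply: capvS => //; apply: addvSl.
      by rewrite subv_cap addvSr -memvE xK.
    move/dimvS. have := dimvS (capvSl V K). have := dimvS (capvSl (V + <[x]>) K). lia.
  apply/eqP; rewrite eqEsubv KV andbT; apply/subvP => x xV.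
  apply/negPn/negP => xK.
  set U := (K + <[x]>)%VS.
  have UV : (U <= V)%VS by rewrite subv_add KV -memvE xV.
  set D := (V :\: U)%VS.
  set W := (K + D)%VS.
  have WV : (W <= V)%VS by rewrite subv_add KV diffvSl.
  have WxV : (W + <[x]> = V)%VS.
    by rewrite /W [(K + D)%VS]addvC -addvA addv_diff (addv_idPl UV).
  have [_ cy2] := cy x xV.
  have := cy2 W WV WxV; rewrite !hK /rk (capv_idPr KV).
  have KW : (K <= W)%VS by apply: addvSl.
  rewrite (capv_idPr KW).
  have KD0 : (K :&: D = 0)%VS.
    apply/eqP; rewrite -subv0 -(capv_diff V U) capvC.
    by apply: capvS => //; apply: addvSl.
  have := dimv_sum_cap K D; rewrite KD0 dimv0 -/W.
  have := dimv_cap_compl V U; rewrite (capv_idPr UV) -/D.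
  have := dim_add_line xK; rewrite -/U.
  lia.
move=> ->; split.
  move=> x xK; rewrite !hK.
  have -> : rk K K = 0%N by apply/rk0P.
  rewrite lt0n; apply/negP => /eqP/rk0P.
  by rewrite subv_add -memvE (negbTE xK) andbF.
move=> x xK; split=> // W WK _; rewrite !hK.
have -> : rk K K = 0%N by apply/rk0P.
by apply/rk0P.
Qed.

Lemma lemmaA : qcl r 0%VS = K.
Proof.
apply/eqP; rewrite eqEsubv; apply/andP; split.
  apply/subv_sumP => x /eqP; rewrite add0v !hK.
  have -> : rk K 0 = 0%N by apply/rk0P; apply: sub0v.
  by move/rk0P.
apply/subvP => x xK; rewrite memvE.
apply: (sumv_sup (x : finvect_type E)) => //.
rewrite add0v !hK.
have -> : rk K 0 = 0%N by apply/rk0P; apply: sub0v.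
by apply/eqP/rk0P; rewrite -memvE.
Qed.
End Step1b.

Section Step1a.
Hypothesis H : forall V, qcyclic_flat r V <-> V = qcl r 0%VS.
Let C := qcl r 0%VS.

Lemma minZ N : forall k Z, (\dim Z <= k)%N -> (\dim Z - r Z)%N = N ->
  exists Z, (\dim Z - r Z)%N = N /\
    forall W, (\dim W < \dim Z)%N -> (\dim W - r W)%N <> N.
Proof.
elim=> [|k IH] Z hZ hN.
  exists Z; split=> // W; lia.
case: (classic (exists W, (\dim W < \dim Z)%N /\ (\dim W - r W)%N = N)).
  by case=> W [h1 h2]; apply: (IH W) => //; lia.
move=> hn; exists Z; split=> // W h1 h2; apply: hn; by exists W.
Qed.

Lemma r_full : r fullv = (\dim (fullv : {vspace E}) - \dim C)%N.
Proof.
set N := (\dim (fullv : {vspace E}) - r fullv)%N.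
have [Z [hZ hmin]] := @minZ N _ fullv (leqnn _) erefl.
have cfZ : qcyclic_flat r Z.
  split.
    move=> x xZ; rewrite ltnNge; apply/negP => hle.
    have := r_le_sup (subvf (Z + <[x]>)%VS).
    have := dim_add_line xZ. have := dimvS (subvf (Z + <[x]>)%VS).
    have := r_dim Z. have := r_dim fullv.
    rewrite /N in hZ. lia.
  move=> x xZ; split=> // W WZ WxZ.
  case: (eqVneq W Z) => [-> //|WnZ].
  have ltWZ : (\dim W < \dim Z)%N.
    have := dimv_leqif_eq WZ => /leqifP; by rewrite (negbTE WnZ).
  have := hmin W ltWZ. have := r_le_sup WZ. have := r_mono WZ.
  have := dim_add_le W x; rewrite WxZ.
  have := r_dim W. lia.
have ZC := (H Z).1 cfZ.
move: hZ; rewrite ZC -/C r_cl0 subn0 /N => hZ.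
have := r_dim fullv. lia.
Qed.

Lemma step1a V : r V = rk C V.
Proof.
apply/eqP; rewrite eqn_leq rk_ge ?r_cl0 //=.
set W := (C + (V + C)^C)%VS.
have hVW : (V + W = fullv)%VS by rewrite /W addvA addv_complf.
have := r_sub V W; rewrite hVW r_full.
have := rk_ge W r_cl0; rewrite /rk.
have CW : (C <= W)%VS by apply: addvSl.
rewrite (capv_idPr CW).
have := dimv_sum_cap C (V + C)^C; rewrite -/W dimv_compl.
have := dimv_sum_cap V C. have := dimvS (subvf (V + C)%VS).
have := dimvS (capvSl V C).
have := r_dim V.
lia.
Qed.
End Step1a.
End Gen.

Theorem corollary7p10 (F : finFieldType) (E : vectType F)
  (r : {vspace E} -> nat) (Hr : qmatroid r) :
  let l := \dim (qcl r 0%VS) in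
  let f := (\dim {:E} - l)%N in
  (forall V : {vspace E}, qcyclic_flat r V <-> V = qcl r 0%VS) <->
  qequiv r (qdsum (@qU0 F l) (@qUfree F f)).
Proof.
move=> l f; split.
  move=> H.
  have hf : f = \dim (qcl r 0%VS)^C by rewrite /f dimv_compl.
  have [phi [k0 im0 hC]] := construct hf.
  exists phi; split=> //; first exact/eqP.
  move=> V; rewrite (qdsum_rk (fun _ => erefl) (fun _ => erefl)) -hC rk_img //.
  by rewrite -(step1a Hr H).
case=> phi [k0 im0 hV].
have k0' : lker phi == 0%VS by apply/eqP.
set K := (phi @^-1: lker (qpi2 'rV[F]_l 'rV[F]_f))%VS.
have hK : (phi @: K)%VS = lker (qpi2 'rV[F]_l 'rV[F]_f).
  by apply: lpreimK; rewrite im0 subvf.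
have hr : forall V, r V = rk K V.
  move=> V; rewrite -hV (qdsum_rk (fun _ => erefl) (fun _ => erefl)) -hK.
  by rewrite rk_img.
have cl := lemmaA hr.
by move=> V; rewrite cl; apply: step1b.
Qed.
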